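(* Let $\mathbf{i}=(i_1,\dots,i_r)$, $\mathbf{j}=(j_1,\dots,j_r)$ be sequences of positive integers with equal sums $N$, and suppose $g=\det M(\mathbf{i};\mathbf{j})$ is nonzero and irreducible. If $r=1$, then $g$ is homogeneous. If $r>1$, then the homogeneous component of $g$ of degree $\deg(g)-1$ is nonzero.
   Context: $M(\mathbf{i};\mathbf{j})$ is the $N\times N$ matrix whose rows are divided into blocks of sizes $i_1,\dots,i_r$ (top to bottom) and columns into blocks of sizes $j_r,\dots,j_1$ (left to right; the block of size $j_t$ is column block $t$). Row block $s$ has an $i_s\times j_s$ matrix $A^s$ of indeterminates in column block $s$; for $s\ge 2$ the matrix $I_{i_s,j_{s-1}}$ in column block $s-1$; zeros in column blocks $t<s-1$; and indeterminates in column blocks $t>s$. $I_{c,d}$ is the $c\times d$ matrix with $1$s on its main diagonal and $0$s elsewhere. All indeterminates are distinct. *)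

(* Defs.v *)
From HB Require Import structures.
From mathcomp Require Import all_boot all_order all_algebra.
From mathcomp Require Import mpoly.
Set Implicit Arguments. Unset Strict Implicit. Unset Printing Implicit Defensive.
Import GRing.Theory.
Local Open Scope ring_scope.

Definition pre (s : seq nat) (k : nat) : nat := (\sum_(x <- take k s) x)%N.

(* 0-based index of the block (of sizes s, listed in order) containing position a *)
Definition blk (s : seq nat) (a : nat) : nat :=
  count (fun k => pre s k.+1 <= a)%N (iota 0 (size s)).

(* Row blocks (0-based s) have sizes i_1..i_r top to bottom; column blocks
   listed left to right have sizes j_r,...,j_1, the block at left-to-right
   position u being column block t = r-1-u (0-based). *)
Definition Mij (K : fieldType) (i j : seq nat) (N : nat) : 'M[{mpoly K[N * N]}]_N :=
  \matrix_(a < N, b < N)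
    let s := blk i a in
    let p := (a - pre i s)%N in
    let u := blk (rev j) b in
    let t := ((size j).-1 - u)%N in
    let q := (b - pre (rev j) u)%N in
    if (s <= t)%N then 'X_(mxvec_index a b)
    else if s == t.+1 then (p == q)%:R
    else 0.

Definition irreducible_elt (R : comUnitRingType) (x : R) : Prop :=
  x \isn't a GRing.unit /\
  forall a b : R, x = a * b -> a \is a GRing.unit \/ b \is a GRing.unit.

(* Main.v *)
Require Import Defs.
From HB Require Import structures.
From mathcomp Require Import all_boot all_order all_algebra.
From mathcomp Require Import perm mpoly.
From mathcomp Require Import zify.
Set Implicit Arguments. Unset Strict Implicit. Unset Printing Implicit Defensive.
Import GRing.Theory.

Lemma pre0 s : pre s 0 = 0%N.
Proof. by rewrite /pre take0 big_nil. Qed.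
Lemma pre_nil k : pre [::] k = 0%N.
Proof. by rewrite /pre big_nil. Qed.
Lemma preS y s k : pre (y :: s) k.+1 = (y + pre s k)%N.
Proof. by rewrite /pre /= big_cons. Qed.
Lemma blk_nil x : blk [::] x = 0%N.
Proof. by []. Qed.
Lemma blk_cons y s x : blk (y :: s) x = if (x < y)%N then 0%N else (blk s (x - y)).+1.
Proof.
rewrite /blk /= -add1n iotaDl count_map /= preS pre0 addn0.
case: (ltnP x y) => hxy.
  rewrite add0n; apply/eqP; rewrite -leqn0 leqNgt -has_count; apply/negP.
  by case/hasP => k _ /=; rewrite preS; lia.
rewrite add1n; congr (_.+1); apply: eq_count => k /=; rewrite add1n preS; lia.
Qed.
Lemma blk_lt s x : (x < \sum_(y <- s) y)%N -> (blk s x < size s)%N.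
Proof.
elim: s x => [|y s IH] x; first by rewrite big_nil.
rewrite big_cons blk_cons /=; case: (ltnP x y) => // h1 h2.
by rewrite ltnS IH //; lia.
Qed.
Lemma pre_blk s x : (pre s (blk s x) <= x)%N.
Proof.
elim: s x => [|y s IH] x; first by rewrite blk_nil pre0.
rewrite blk_cons; case: (ltnP x y) => h; first by rewrite pre0.
rewrite preS; have := IH (x - y); lia.
Qed.
Lemma blk_pre s x : (x < \sum_(y <- s) y)%N -> (x < pre s (blk s x).+1)%N.
Proof.
elim: s x => [|y s IH] x; first by rewrite big_nil.
rewrite big_cons blk_cons; case: (ltnP x y) => h1 h2; first by rewrite preS pre0; lia.
rewrite preS; have := IH (x - y); lia.
Qed.
Lemma blk_at s k p : (k < size s)%N -> (p < nth 0 s k)%N -> blk s (pre s k + p) = k.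
Proof.
elim: s k => [|y s IH] [|k] //= hk hp.
  by rewrite pre0 add0n blk_cons hp.
rewrite preS blk_cons ifF; last lia.
by rewrite (_ : _ - y = pre s k + p)%N ?IH //; lia.
Qed.
Lemma pre_size s : pre s (size s) = (\sum_(y <- s) y)%N.
Proof. by rewrite /pre take_size. Qed.
Lemma preSn s k : (k < size s)%N -> pre s k.+1 = (pre s k + nth 0 s k)%N.
Proof.
elim: s k => [|y s IH] [|k] //= hk; first by rewrite preS !pre0 addn0.
by rewrite !preS IH // addnA.
Qed.
Lemma pre_le s k : (pre s k <= \sum_(y <- s) y)%N.
Proof. by rewrite -{2}(cat_take_drop k s) big_cat /= leq_addr. Qed.

Local Open Scope ring_scope.

Lemma mxvec_index_inj n (a a' b b' : 'I_n) :
  mxvec_index a b = mxvec_index a' b' -> a = a' /\ b = b'.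
Proof. by move/cast_ord_inj/enum_rank_inj => [-> ->]. Qed.

Definition good n (v o : 'I_n -> 'I_n -> bool) (s : 'S_n) :=
  [forall a, v a (s a) || o a (s a)].
Definition mon n (v : 'I_n -> 'I_n -> bool) (s : 'S_n) : 'X_{1..n * n} :=
  \big[mnm_add/mnm0]_(a | v a (s a)) U_(mxvec_index a (s a))%MM.
Definition nvars n (v : 'I_n -> 'I_n -> bool) (s : 'S_n) := #|[set a | v a (s a)]|.

Lemma mdeg_mon n v (s : 'S_n) : mdeg (mon v s) = nvars v s.
Proof.
rewrite /mon /nvars mdeg_sum.
rewrite (eq_bigr (fun _ => 1%N)) => [|a _]; last exact: mdeg1.
by rewrite sum1_card cardsE.
Qed.

Lemma mon_coord n v (s : 'S_n) a b :
  (mon v s) (mxvec_index a b) = (v a (s a) && (s a == b)) :> nat.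
Proof.
rewrite /mon mnm_sumE.
case: (boolP (v a (s a) && (s a == b))) => [/andP[va /eqP sab]|nv].
  rewrite (bigD1 a) //= mnm1E sab eqxx big1 ?addn0 // => a' /andP[_ na'].
  rewrite mnm1E; case: eqP => //= /mxvec_index_inj [ha _].
  by rewrite ha eqxx in na'.
rewrite big1 // => a' va'; rewrite mnm1E; case: eqP => //= /mxvec_index_inj [ha hb].
by move: nv; rewrite -ha -hb va' eqxx.
Qed.

Lemma mon_inj n (v o : 'I_n -> 'I_n -> bool) (s t : 'S_n) :
  (forall a b b', o a b -> o a b' -> b = b') ->
  (forall a b, o a b -> ~~ v a b) ->
  good v o s -> good v o t -> mon v s = mon v t -> s = t.
Proof.
move=> orow ov /forallP gs /forallP gt e; apply/permP => a.
have := mon_coord v s a (s a); have := mon_coord v t a (s a).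
have := mon_coord v s a (t a); have := mon_coord v t a (t a).
rewrite e !eqxx !andbT.
case vs: (v a (s a)); case vt: (v a (t a)) => /=.
- by move=> ->; case: eqP.
- by move=> _ _ ->.
- by move=> ->.
move=> _ _ _ _; apply: (orow a); [by move: (gs a); rewrite vs | by move: (gt a); rewrite vt].
Qed.

Lemma term_E (K : fieldType) n (v o : 'I_n -> 'I_n -> bool) (M : 'M[{mpoly K[n * n]}]_n) (s : 'S_n) :
  (forall a b, M a b = if v a b then 'X_(mxvec_index a b) else (o a b)%:R) ->
  \prod_a M a (s a) = if good v o s then 'X_[mon v s] else 0.
Proof.
move=> HM; case: ifP => [/forallP gs | /negbT].
  rewrite /mon -mprodXE [RHS]big_mkcond /=; apply: eq_bigr => a _.
  rewrite HM; case: ifP => // va; move: (gs a); rewrite va /= => ->; by [].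
rewrite negb_forall => /existsP [a]; rewrite negb_or => /andP[na no].
by rewrite (bigD1 a) //= HM (negbTE na) (negbTE no) mul0r.
Qed.

Lemma det_E (K : fieldType) n (v o : 'I_n -> 'I_n -> bool) (M : 'M[{mpoly K[n * n]}]_n) :
  (forall a b, M a b = if v a b then 'X_(mxvec_index a b) else (o a b)%:R) ->
  \det M = \sum_(s : 'S_n | good v o s) (-1) ^+ s *: 'X_[mon v s].
Proof.
move=> HM; rewrite /determinant [RHS]big_mkcond /=; apply: eq_bigr => s _.
by rewrite (term_E _ HM); case: ifP => _; rewrite ?mulr0 // scaler_sign mulr_sign.
Qed.

Lemma mcoeff_sum' (K : ringType) n I (r : seq I) (P : pred I) (F : I -> {mpoly K[n]}) m :
  (\sum_(i <- r | P i) F i)@_m = \sum_(i <- r | P i) (F i)@_m.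
Proof. by apply: (big_morph (mcoeff m)) => [x y|]; rewrite ?mcoeffD ?mcoeff0. Qed.

Lemma coef_det (K : fieldType) n (v o : 'I_n -> 'I_n -> bool) (M : 'M[{mpoly K[n * n]}]_n) (t : 'S_n) :
  (forall a b, M a b = if v a b then 'X_(mxvec_index a b) else (o a b)%:R) ->
  (forall a b b', o a b -> o a b' -> b = b') ->
  (forall a b, o a b -> ~~ v a b) ->
  good v o t -> (\det M)@_(mon v t) = (-1) ^+ t.
Proof.
move=> HM orow ov gt; rewrite (det_E HM) mcoeff_sum' (bigD1 t) //=.
rewrite mcoeffZ mcoeffX eqxx mulr1 big1 ?addr0 // => s /andP[gs nst].
rewrite mcoeffZ mcoeffX; case: eqP => [/(mon_inj orow ov gs gt) est|]; last by rewrite mulr0.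
by rewrite est eqxx in nst.
Qed.

Lemma supp_det (K : fieldType) n (v o : 'I_n -> 'I_n -> bool) (M : 'M[{mpoly K[n * n]}]_n) m :
  (forall a b, M a b = if v a b then 'X_(mxvec_index a b) else (o a b)%:R) ->
  m \in msupp (\det M) -> exists2 s, good v o s & m = mon v s.
Proof.
move=> HM; rewrite mcoeff_msupp => nz.
have [//|no] := boolP [exists s, good v o s && (mon v s == m)].
  by case/existsP => s /andP[gs /eqP <-]; exists s.
move: nz; rewrite (det_E HM) mcoeff_sum' big1 ?eqxx // => s gs.
rewrite mcoeffZ mcoeffX; case: eqP => [e|]; last by rewrite mulr0.
by move: no; rewrite negb_exists => /forallP /(_ s); rewrite gs e eqxx.
Qed.

Lemma pihomog_det (K : fieldType) n (v o : 'I_n -> 'I_n -> bool) (M : 'M[{mpoly K[n * n]}]_n) d :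
  (forall a b, M a b = if v a b then 'X_(mxvec_index a b) else (o a b)%:R) ->
  pihomog mdeg d (\det M) = \sum_(s : 'S_n | good v o s && (nvars v s == d)) (-1) ^+ s *: 'X_[mon v s].
Proof.
move=> HM; rewrite (det_E HM) linear_sum [RHS]big_mkcondr /=; apply: eq_bigr => s gs.
rewrite linearZ /= pihomogX (_ : (_ == d) = (nvars v s == d)); last exact: (congr1 (fun x => x == d) (mdeg_mon v s)).
by case: ifP => _; rewrite ?scaler0.
Qed.

Lemma coef_pihomog (K : fieldType) n (v o : 'I_n -> 'I_n -> bool) (M : 'M[{mpoly K[n * n]}]_n) (t : 'S_n) :
  (forall a b, M a b = if v a b then 'X_(mxvec_index a b) else (o a b)%:R) ->
  (forall a b b', o a b -> o a b' -> b = b') ->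
  (forall a b, o a b -> ~~ v a b) ->
  good v o t -> pihomog mdeg (nvars v t) (\det M) != 0.
Proof.
move=> HM orow ov gt; apply/eqP => /(congr1 (mcoeff (mon v t))).
rewrite (pihomog_det _ HM) mcoeff_sum' (bigD1 t) /=; last by rewrite gt eqxx.
rewrite mcoeffZ mcoeffX eqxx mulr1 big1 ?addr0 ?mcoeff0; first by apply/eqP; rewrite signr_eq0.
move=> s /andP[/andP[gs _] nst].
rewrite mcoeffZ mcoeffX; case: eqP => [/(mon_inj orow ov gs gt) est|]; last by rewrite mulr0.
by rewrite est eqxx in nst.
Qed.

Lemma up_swap n (sA tB : 'I_n -> nat) (o : 'I_n -> 'I_n -> bool) (s : 'S_n) a c :
  let v := fun a b => (sA a <= tB b)%N in
  (forall a b, o a b -> sA a = (tB b).+1) ->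
  (forall a b b', o a b -> o a b' -> b = b') ->
  (forall a a' b, o a b -> o a' b -> a = a') ->
  good v o s -> o a c -> s a != c ->
  exists t, good v o t /\ (nvars v t).+1 = nvars v s.
Proof.
move=> v H1 orow ocol /forallP gs oac nsac.
pose a' := (s^-1)%g c.
have sa' : s a' = c by rewrite /a' permKV.
have na' : a' != a by apply: contraNneq nsac => <-; rewrite sa'.
have vsa : v a (s a).
  by move: (gs a); case/orP => // /(orow _ _ _ oac) e; rewrite e eqxx in nsac.
have va'c : v a' c.
  move: (gs a'); rewrite sa'; case/orP => // /(ocol _ _ _ oac) e.
  by rewrite e eqxx in na'.
have va's : v a' (s a).
  by move: vsa va'c; rewrite /v (H1 _ _ oac); lia.
have nvac : ~~ v a c by rewrite /v (H1 _ _ oac); lia.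
exists (tperm a a' * s)%g; split.
  apply/forallP => x; rewrite permM.
  case: tpermP => [->|->|/eqP nxa /eqP nxa'].
  - by rewrite sa' oac orbT.
  - by rewrite va's.
  - exact: gs.
rewrite /nvars; have -> : [set x | v x ((tperm a a' * s)%g x)] = [set x | v x (s x)] :\ a.
  apply/setP => x; rewrite !inE permM.
  case: tpermP => [->|->|/eqP nxa /eqP nxa'].
  - by rewrite eqxx sa' (negbTE nvac).
  - by rewrite na' va's sa' va'c.
  - by rewrite nxa.
by rewrite (cardsD1 a [set x | v x (s x)]) inE vsa.
Qed.

Lemma down_swap n (sA tB : 'I_n -> nat) (o : 'I_n -> 'I_n -> bool) (s : 'S_n) a a1 :
  let v := fun a b => (sA a <= tB b)%N in
  (forall a b, o a b -> sA a = (tB b).+1) ->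
  good v o s -> o a1 (s a1) -> v a (s a1) -> v a1 (s a) -> v a (s a) ->
  exists t, good v o t /\ nvars v t = (nvars v s).+1.
Proof.
move=> v H1 /forallP gs o1 va1 v1a vaa.
have nv1 : ~~ v a1 (s a1) by rewrite /v (H1 _ _ o1); lia.
have na : a != a1 by apply: contraNneq nv1 => <-.
exists (tperm a a1 * s)%g; split.
  apply/forallP => x; rewrite permM.
  case: tpermP => [->|->|/eqP nxa /eqP nxa'].
  - by rewrite va1.
  - by rewrite v1a.
  - exact: gs.
rewrite /nvars; have -> : [set x | v x ((tperm a a1 * s)%g x)] = a1 |: [set x | v x (s x)].
  apply/setP => x; rewrite !inE permM.
  case: tpermP => [->|->|/eqP nxa /eqP nxa'].
  - by rewrite va1 vaa orbT.
  - by rewrite eqxx v1a.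
  - by rewrite (negbTE nxa') /=.
by rewrite cardsU1 inE (negbTE nv1).
Qed.

Lemma exists_max n (v o : 'I_n -> 'I_n -> bool) (s0 : 'S_n) :
  good v o s0 -> exists2 s, good v o s & forall t, good v o t -> (nvars v t <= nvars v s)%N.
Proof.
move=> g0; case: (arg_maxnP (nvars v) g0) => s gs smax.
by exists s.
Qed.

Lemma perm_split n1 n2 (S : {set 'I_(n1 + n2)}) :
  #|S| = n1 -> exists p : 'S_(n1 + n2), forall x, (p x \in S) = (x < n1)%N.
Proof.
move=> cS.
have cC : #|~: S| = n2 by have := cardsC S; rewrite cS card_ord; lia.
pose sq := enum S ++ enum (~: S).
have szs : size sq = (n1 + n2)%N.
  by rewrite size_cat -!cardE cardsC card_ord.
have usq : uniq sq.
  rewrite cat_uniq !enum_uniq /= andbT; apply/hasPn => x.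
  by rewrite !mem_enum inE => ->.
pose f (x : 'I_(n1 + n2)) := nth x sq x.
have finj : injective f.
  move=> x y; rewrite /f (set_nth_default x y) ?szs //.
  by move/eqP; rewrite nth_uniq ?szs // => /eqP /val_inj.
exists (perm finj) => x; rewrite permE /f nth_cat -cardE cS.
case: ltnP => hx.
  by rewrite -(mem_enum (mem S)) mem_nth // -cardE cS.
have : nth x (enum (~: S)) (x - n1) \in enum (~: S).
  by rewrite mem_nth // -cardE cC; have := ltn_ord x; lia.
by rewrite mem_enum inE => /negbTE.
Qed.

Lemma block_factor_aux (R F : comRingType) (phi : {rmorphism R -> F}) n1 n2
  (M : 'M[R]_(n1 + n2)) (S T : {set 'I_(n1 + n2)}) x0 y0 :
  #|S| = n1 -> #|T| = n1 ->
  (forall a b, a \notin S -> b \in T -> M a b = 0) ->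
  x0 \in S -> (forall b, phi (M x0 b) = 0) ->
  y0 \notin T -> (forall a, phi (M a y0) = 0) ->
  exists P Q, \det M = P * Q /\ phi P = 0 /\ phi Q = 0.
Proof.
move=> cS cT Z Sx0 Hx0 Ty0 Hy0.
have [p Hp] := perm_split cS; have [q Hq] := perm_split cT.
pose M' := row_perm p (col_perm q M).
pose c : R := (-1) ^+ p * (-1) ^+ q.
have dM : \det M = c * \det M'.
  rewrite /M' row_permE col_permE !det_mulmx !det_perm odd_permV /c.
  have ha : (-1) ^+ p * (-1) ^+ p = 1 :> R by rewrite -expr2 sqrr_sign.
  have hb : (-1) ^+ q * (-1) ^+ q = 1 :> R by rewrite -expr2 sqrr_sign.
  transitivity ((-1) ^+ p * (-1) ^+ p * ((-1) ^+ q * (-1) ^+ q) * \det M); last first.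
    by rewrite (mulrC (\det M)) !mulrA (mulrAC ((-1) ^+ p) ((-1) ^+ q)).

  by rewrite ha hb !mul1r.
have dl0 : dlsubmx M' = 0.
  apply/matrixP => i j; rewrite !mxE; apply: Z.
    by rewrite Hp /= -ltnNge leq_addr.
  by rewrite Hq /= ltn_ord.
rewrite dM; have -> : \det M' = \det (ulsubmx M') * \det (drsubmx M').
  by rewrite -{1}(submxK M') dl0 det_ublock.
exists (c * \det (ulsubmx M')), (\det (drsubmx M')); split; first by rewrite mulrA.
split.
  rewrite rmorphM /= -det_map_mx.
  have hk : ((p^-1)%g x0 < n1)%N by rewrite -Hp permKV.
  rewrite (expand_det_row _ (Ordinal hk)) big1 ?mulr0 // => j _.
  rewrite !mxE /=.
  have -> : lshift n2 (Ordinal hk) = (p^-1)%g x0 by apply: val_inj.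
  by rewrite permKV Hx0 mul0r.
rewrite -det_map_mx.
have hk : (n1 <= (q^-1)%g y0)%N by rewrite leqNgt -Hq permKV.
have hk' : ((q^-1)%g y0 - n1 < n2)%N by have := ltn_ord ((q^-1)%g y0); lia.
rewrite (expand_det_col _ (Ordinal hk')) big1 // => i _.
rewrite !mxE /=.
have -> : rshift n1 (Ordinal hk') = (q^-1)%g y0 by apply: val_inj => /=; lia.
by rewrite permKV Hy0 mul0r.
Qed.

Lemma block_factor (R F : comRingType) (phi : {rmorphism R -> F}) n
  (M : 'M[R]_n) (S T : {set 'I_n}) x0 y0 :
  #|S| = #|T| ->
  (forall a b, a \notin S -> b \in T -> M a b = 0) ->
  x0 \in S -> (forall b, phi (M x0 b) = 0) ->
  y0 \notin T -> (forall a, phi (M a y0) = 0) ->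
  exists P Q, \det M = P * Q /\ phi P = 0 /\ phi Q = 0.
Proof.
move=> cST.
have [n1 [n2 [e cS]]] : exists n1 n2, n = (n1 + n2)%N /\ #|S| = n1.
  exists #|S|, (n - #|S|)%N; split => //.
  by have := max_card S; rewrite card_ord; lia.
subst n; have cT : #|T| = n1 by rewrite -cST.
move=> Z Sx0 Hx0 Ty0 Hy0.
exact: (block_factor_aux cS cT Z Sx0 Hx0 Ty0 Hy0).
Qed.

Theorem corollary6p6 (K : fieldType) (i j : seq nat) :
  size i = size j ->
  all (fun x => 0 < x)%N i -> all (fun x => 0 < x)%N j ->
  (\sum_(x <- i) x)%N = (\sum_(x <- j) x)%N ->
  let N := (\sum_(x <- i) x)%N in
  let g := \det (Mij K i j N) in
  g != 0 -> irreducible_elt g ->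
  (size i = 1%N -> g \is homog mdeg) /\
  ((1 < size i)%N -> pihomog mdeg (msize g).-2 g != 0).
Proof.
move=> hsz hi hj hsum N g gnz irr.
pose sA (a : 'I_N) := blk i a.
pose tB (b : 'I_N) := ((size j).-1 - blk (rev j) b)%N.
pose o (a b : 'I_N) := (sA a == (tB b).+1) &&
   ((a - pre i (sA a))%N == (b - pre (rev j) (blk (rev j) b))%N).
pose v (a b : 'I_N) := (sA a <= tB b)%N.
have HM : forall a b, Mij K i j N a b = if v a b then 'X_(mxvec_index a b) else (o a b)%:R.
  move=> a b; rewrite /Mij mxE /= /v /o /sA /tB.
  case: ifP => // _; case: eqP => //= _; by case: eqP.
have sumrev : (\sum_(x <- rev j) x)%N = N by rewrite big_rev -hsum.
have hsA : forall a, (sA a < size i)%N by move=> a; apply: blk_lt; exact: ltn_ord.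
have hbB : forall b : 'I_N, (blk (rev j) b < size j)%N.
  by move=> b; rewrite -size_rev; apply: blk_lt; rewrite sumrev; exact: ltn_ord.
have preA : forall a : 'I_N, (pre i (sA a) <= a)%N by move=> a; apply: pre_blk.
have preB : forall b : 'I_N, (pre (rev j) (blk (rev j) b) <= b)%N by move=> b; apply: pre_blk.
have H1 : forall a b, o a b -> sA a = (tB b).+1 by move=> a b /andP[/eqP].
have orow : forall a b b', o a b -> o a b' -> b = b'.
  move=> a b b' /andP[/eqP e1 /eqP e2] /andP[/eqP e1' /eqP e2'].
  have eb : blk (rev j) b = blk (rev j) b'.
    move: e1 e1'; rewrite /tB => -> /eqP; have := hbB b; have := hbB b'; lia.
  apply: val_inj => /=; move: e2 e2'; rewrite eb => -> /eqP.
  have := preB b; have := preB b'; rewrite eb; lia.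
have ocol : forall a a' b, o a b -> o a' b -> a = a'.
  move=> a a' b /andP[/eqP e1 /eqP e2] /andP[/eqP e1' /eqP e2'].
  have ea : sA a = sA a' by rewrite e1 e1'.
  apply: val_inj => /=; rewrite -ea in e2'.
  have := preA a; have := preA a'; rewrite -ea; lia.
have ov : forall a b, o a b -> ~~ v a b by move=> a b /H1; rewrite /v => ->; lia.
have [s0 gs0] : exists s0, good v o s0.
  case: (pickP (good v o)) => [s0 gs0| none]; first by exists s0.
  by move: gnz; rewrite /g (det_E HM) big_pred0 ?eqxx.
have [sg gsg smax] := exists_max gs0.
split.
  move=> r1; apply/homogP; exists N; apply/dhomogP => m /(supp_det HM) [s _ ->].
  have allv : forall a b, v a b.
    by move=> a b; rewrite /v; have := hsA a; rewrite r1; lia.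
  transitivity (nvars v s); first exact: mdeg_mon.
  rewrite /nvars (_ : [set a | v a (s a)] = setT); first by rewrite cardsT card_ord.
  by apply/setP => a; rewrite !inE allv.
move=> r2.
have hszj : (1 < size j)%N by rewrite -hsz.
have posi : forall k, (k < size i)%N -> (0 < nth 0%N i k)%N.
  by move=> k hk; apply: (allP hi); apply: mem_nth.
have posj : forall k, (k < size j)%N -> (0 < nth 0%N j k)%N.
  by move=> k hk; apply: (allP hj); apply: mem_nth.
have [t [gt ht]] : exists t, good v o t /\ (nvars v t).+1 = nvars v sg.
  case: (boolP [exists a, exists c, o a c && (sg a != c)]).
    case/existsP => a /existsP [c /andP [oac nac]].
    exact: (up_swap H1 orow ocol gsg oac nac).
  rewrite negb_exists => /forallP allused.
  have used : forall a c, o a c -> sg a = c.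
    move=> a c oac; have := allused a; rewrite negb_exists => /forallP /(_ c).
    by rewrite oac /= negbK => /eqP.
  exfalso.
  have a1lt : (pre i 1 < N)%N.
    have := pre_le i 2; rewrite (preSn r2); have := posi 1%N r2; rewrite /N; lia.
  pose a1 : 'I_N := Ordinal a1lt.
  have sA1 : sA a1 = 1%N by rewrite /sA /= -[pre i 1]addn0 blk_at // posi.
  have pj : (0 < nth 0%N (rev j) (size j).-1)%N.
    rewrite nth_rev; last by lia.
    by apply: posj; lia.
  have c1lt : (pre (rev j) (size j).-1 < N)%N.
    have := pre_size (rev j); rewrite size_rev sumrev.
    have -> : size j = ((size j).-1).+1 by lia.
    rewrite preSn ?size_rev //; last by lia.
    move: pj; rewrite (_ : ((size j).-1.+1).-1 = (size j).-1) //; lia.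
  pose c1 : 'I_N := Ordinal c1lt.
  have bc1 : blk (rev j) c1 = (size j).-1.
    by rewrite /= -[pre _ _]addn0 blk_at // size_rev; lia.
  have tB1 : tB c1 = 0%N by rewrite /tB bc1 subnn.
  have o1 : o a1 c1 by rewrite /o sA1 tB1 bc1 /= !subnn eqxx.
  have sg1 : sg a1 = c1 := used _ _ o1.
  pose S := [set a | (sA a == 0%N) || [exists b, o a b && (tB b == 0%N)]].
  pose T := [set b | tB b == 0%N].
  have ST1 : forall a, a \in S -> sg a \in T.
    move=> a; rewrite !inE => /orP [/eqP sa0 | /existsP [b /andP [oab /eqP tb0]]]; last first.
      by rewrite (used _ _ oab) tb0.
    case: (posnP (tB (sg a))) => [//|tpos].
    have h1 : o a1 (sg a1) by rewrite sg1.
    have h2 : v a (sg a1) by rewrite /v sa0.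
    have h3 : v a1 (sg a) by rewrite /v sA1.
    have h4 : v a (sg a) by rewrite /v sa0.
    have [t [gt et]] := @down_swap N sA tB o sg a a1 H1 gsg h1 h2 h3 h4.
    by have := smax t gt; rewrite et ltnn.
  have ST2 : forall a, a \notin S -> sg a \notin T.
    move=> a; apply: contra; rewrite !inE => /eqP tb0.
    move/forallP: gsg => /(_ a) /orP [|oas].
      by rewrite /v tb0 leqn0 => ->.
    by apply/orP; right; apply/existsP; exists (sg a); rewrite oas tb0 eqxx.
  have cST : #|S| = #|T|.
    have -> : T = sg @: S.
      apply/setP => b; apply/idP/imsetP.
        move=> Tb; exists ((sg^-1)%g b); last by rewrite permKV.
        by apply: contraTT Tb => /ST2; rewrite permKV.
      by case=> a Sa ->; apply: ST1.
    by rewrite card_imset //; exact: perm_inj.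
  have Z : forall a b, a \notin S -> b \in T -> Mij K i j N a b = 0.
    move=> a b nS; rewrite inE => /eqP tb0; rewrite HM.
    have nv : ~~ v a b.
      by apply: contra nS; rewrite /v tb0 leqn0 => sa0; rewrite inE sa0.
    have no : ~~ o a b.
      apply: contra nS => oab; rewrite inE; apply/orP; right; apply/existsP.
      by exists b; rewrite oab tb0.
    by rewrite (negbTE nv) (negbTE no).
  have N0 : (0 < N)%N := leq_ltn_trans (leq0n _) a1lt.
  pose x0 : 'I_N := Ordinal N0.
  have sx0 : sA x0 = 0%N.
    have := @blk_at i 0 0 (ltnW r2) (posi 0%N (ltnW r2)).
    by rewrite pre0 addn0.
  have Sx0 : x0 \in S by rewrite inE sx0 eqxx.
  pose phi := meval (fun _ : 'I_(N * N) => (0 : K)).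
  have Hx0 : forall b, phi (Mij K i j N x0 b) = 0.
    by move=> b; rewrite HM /v sx0 /= /phi mevalXU.
  have ty0 : tB x0 = (size j).-1.
    rewrite /tB (_ : blk (rev j) x0 = 0%N) ?subn0 //.
    have := @blk_at (rev j) 0 0; rewrite pre0 addn0; apply; first by rewrite size_rev; lia.
    rewrite nth_rev; last by lia.
    by apply: posj; lia.
  have Ty0 : x0 \notin T by rewrite inE ty0; lia.
  have Hy0 : forall a, phi (Mij K i j N a x0) = 0.
    move=> a; rewrite HM /v ty0 ifT ?/phi ?mevalXU //.
    by have := hsA a; rewrite hsz; lia.
  have [P [Q [eg [hP hQ]]]] := block_factor cST Z Sx0 Hx0 Ty0 Hy0.
  case: irr => _ /(_ P Q eg) [] /(rmorph_unit phi).
    by rewrite hP unitfE eqxx.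
  by rewrite hQ unitfE eqxx.
have supp_le : forall m, m \in msupp g -> (mdeg m < (nvars v sg).+1)%N.
  move=> m /(supp_det HM) [s gs ->]; rewrite ltnS mdeg_mon; exact: smax.
have msz : msize g = (nvars v sg).+1.
  apply/eqP; rewrite eqn_leq; apply/andP; split.
    by rewrite msizeE; apply/bigmax_leqP_seq => m mm _; exact: supp_le.
  have : mon v sg \in msupp g by rewrite mcoeff_msupp (coef_det HM orow ov gsg) signr_eq0.
  by move/msize_mdeg_lt; rewrite mdeg_mon.
rewrite msz -ht /=.
exact: (coef_pihomog HM orow ov gt).
Qed.
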